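(* Let $\mathbb{F}$ be a field, $p,q\in\mathbb{F}[t]$ monic of degree $2$, and $\mathcal{W}_{p,q}=\mathbb{F}\langle a,b\rangle/(p(a),q(b))$. Let $\Phi$ be an injective endomorphism of the $\mathbb{F}$-algebra $\mathcal{W}_{p,q}$. Then $\Phi(x^\star)=\Phi(x)^\star$ for all $x\in\mathcal{W}_{p,q}$.
   Context: $\mathcal{W}_{p,q}$ is the free associative unital $\mathbb{F}$-algebra on two generators modulo the ideal generated by $p(a),q(b)$. For a $2$-dimensional algebra set $x^\star=\mathrm{tr}(x)-x$; the adjunction $x\mapsto x^\star$ of $\mathcal{W}_{p,q}$ is the unique $\mathbb{F}$-linear anti-automorphism agreeing with this on $\mathbb{F}[a]$ and $\mathbb{F}[b]$ (so $a^\star=\mathrm{tr}(p)-a$, $b^\star=\mathrm{tr}(q)-b$, with $\mathrm{tr}(p)$ minus the coefficient of $t$ in $p$). *)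

(* Defs.v *)
From HB Require Import structures.
From mathcomp Require Import all_boot all_order all_algebra.
Set Implicit Arguments. Unset Strict Implicit. Unset Printing Implicit Defensive.
Import GRing.Theory.
Local Open Scope ring_scope.

Definition trp (F : fieldType) (p : {poly F}) : F := - p`_1.

(* (W, a, b) is the F-algebra presented by generators a, b and relations
   p(a) = 0, q(b) = 0, i.e. W_{p,q} = F<a,b>/(p(a), q(b)), characterized by its
   universal property: for every F-algebra B and u, v in B with p(u) = q(v) = 0
   there is a unique F-algebra morphism W -> B sending a to u and b to v. *)
Definition is_W_presentation (F : fieldType) (p q : {poly F})
    (W : algType F) (a b : W) : Prop :=
  horner_alg a p = 0 /\ horner_alg b q = 0 /\
  forall (B : algType F) (u v : B),
    horner_alg u p = 0 -> horner_alg v q = 0 ->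
    (exists f : {lrmorphism W -> B}, f a = u /\ f b = v) /\
    (forall f g : {lrmorphism W -> B},
        f a = g a -> f b = g b -> forall x, f x = g x).

Definition is_adjunction (F : fieldType) (p q : {poly F})
    (W : algType F) (a b : W) (star : W -> W) : Prop :=
  (forall (c : F) (x y : W), star (c *: x + y) = c *: star x + star y) /\
  star 1 = 1 /\
  (forall x y : W, star (x * y) = star y * star x) /\
  bijective star /\
  star a = (trp p)%:A - a /\
  star b = (trp q)%:A - b.

(* Main.v *)
Require Import Defs.
From HB Require Import structures.
From mathcomp Require Import all_boot all_order all_algebra.
From mathcomp Require Import boolp.
From mathcomp Require Import ring zify.
Set Implicit Arguments. Unset Strict Implicit. Unset Printing Implicit Defensive.
Import GRing.Theory.
Local Open Scope ring_scope.

Section MkLR.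
Variables (F : fieldType) (U V : algType F) (h : U -> V)
  (hl : linear h) (hm : GRing.monoid_morphism h).
Definition hLR := h.
HB.instance Definition _ := GRing.isLinear.Build F U V *:%R hLR hl.
HB.instance Definition _ := GRing.isMonoidMorphism.Build U V hLR hm.
Definition mkLR : {lrmorphism U -> V} := hLR.
Lemma mkLRE x : mkLR x = h x. Proof. by []. Qed.
End MkLR.

Lemma lrmorph_horner (F : fieldType) (A B : algType F) (g : {lrmorphism A -> B})
  (x : A) (p : {poly F}) : g (horner_alg x p) = horner_alg (g x) p.
Proof.
elim/poly_ind: p => [|p c IH]; first by rewrite !rmorph0.
by rewrite !rmorphD !rmorphM /= IH !horner_algC !horner_algX rmorph_alg.
Qed.

Section Ind.
Variables (F : fieldType) (W : algType F) (P : pred W) (HP : GRing.subsemialg_closed P).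
Definition SW of GRing.subsemialg_closed P := {x : W | P x}.
HB.instance Definition _ := [isSub of SW HP for (@sval W P)].
HB.instance Definition _ := [Choice of SW HP by <:].
HB.instance Definition _ := GRing.SubChoice_isSubAlgebra.Build F W P (SW HP) HP.
End Ind.

Lemma W_ind (F : fieldType) (p q : {poly F}) (W : algType F) (a b : W)
  (P : pred W) : is_W_presentation p q a b ->
  GRing.subsemialg_closed P -> P a -> P b -> forall x, P x.
Proof.
move=> [pa [qb U]] HP Pa Pb.
have vl : linear (fun x : SW HP => sval x) by [].
have vm : GRing.monoid_morphism (fun x : SW HP => sval x) by [].
pose v := mkLR vl vm.
pose a' : SW HP := Sub a Pa. pose b' : SW HP := Sub b Pb.
have pa' : horner_alg a' p = 0.
  by apply: val_inj; rewrite /= -[val _]/(v _) lrmorph_horner pa.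
have qb' : horner_alg b' q = 0.
  by apply: val_inj; rewrite /= -[val _]/(v _) lrmorph_horner qb.
have [[f [fa fb]] _] := U _ a' b' pa' qb'.
have hl : linear (fun x => val (f x)).
  by move=> c u w; rewrite linearP.
have hm : GRing.monoid_morphism (fun x => val (f x)).
  by split; [rewrite rmorph1 | move=> u w; rewrite rmorphM].
have il : linear (fun x : W => x) by [].
have im : GRing.monoid_morphism (fun x : W => x) by [].
have [_ Uq] := U _ a b pa qb.
move=> x.
have := Uq (mkLR hl hm) (mkLR il im).
rewrite !mkLRE fa fb => /(_ erefl erefl x); rewrite !mkLRE => <-.
exact: valP.
Qed.

Lemma W_indP (F : fieldType) (p q : {poly F}) (W : algType F) (a b : W)
  (P : W -> Prop) : is_W_presentation p q a b ->
  P 1 -> (forall x y, P x -> P y -> P (x + y)) ->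
  (forall c x, P x -> P (c *: x)) -> (forall x y, P x -> P y -> P (x * y)) ->
  P a -> P b -> forall x, P x.
Proof.
move=> pres P1 PD PZ PM Pa Pb x.
have := @W_ind F p q W a b (fun x => `[< P x >]) pres.
move=> /(_ _ (asboolT Pa) (asboolT Pb) x) /asboolP; apply.
split.
- by rewrite unfold_in /=; apply/asboolT.
- split; first by rewrite unfold_in /=; apply/asboolT; rewrite -(scale0r 1); apply: PZ.
  by move=> u v; rewrite !unfold_in /= => /asboolP Pu /asboolP Pv; apply/asboolT; apply: PD.
- by move=> c u; rewrite !unfold_in /= => /asboolP Pu; apply/asboolT; apply: PZ.
- by move=> u v; rewrite !unfold_in /= => /asboolP Pu /asboolP Pv; apply/asboolT; apply: PM.
Qed.

Lemma horner_quad (F : fieldType) (A : algType F) (p : {poly F}) (x : A) :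
  p \is monic -> size p = 3%N ->
  horner_alg x p = x ^+ 2 + p`_1 *: x + p`_0 *: 1.
Proof.
move=> mp sp.
rewrite -[in LHS](coefK p) poly_def sp linear_sum /= !big_ord_recr big_ord0 /= add0r.
rewrite !linearZ /= !rmorphXn /= horner_algX.
have -> : p`_2 = 1 by move/monicP: mp; rewrite /lead_coef sp.
by rewrite mulr1 !mulr_algl scale1r addrC [(p`_0)%:A + _]addrC addrA expr1.
Qed.

Section Model.
Variable F : fieldType.
Local Notation P := {poly F}.
Definition M2 := (P * P * P * P)%type.
HB.instance Definition _ := GRing.Zmodule.on M2.
Definition mmul (X Y : M2) : M2 :=
  let: (a1,b1,c1,d1) := X in let: (a2,b2,c2,d2) := Y in
  (a1*a2 + b1*c2, a1*b2 + b1*d2, c1*a2 + d1*c2, c1*b2 + d1*d2).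
Definition mone : M2 := (1,0,0,1).
Lemma mmulA : associative mmul.
Proof. move=> [[[a1 b1] c1] d1] [[[a2 b2] c2] d2] [[[a3 b3] c3] d3] /=; congr (_,_,_,_); ring. Qed.
Lemma mmul1 : left_id mone mmul.
Proof. by move=> [[[a1 b1] c1] d1] /=; congr (_,_,_,_); ring. Qed.
Lemma mmulr1 : right_id mone mmul.
Proof. by move=> [[[a1 b1] c1] d1] /=; congr (_,_,_,_); ring. Qed.
Lemma addM2 (a1 b1 c1 d1 a2 b2 c2 d2 : P) :
  ((a1,b1,c1,d1) + (a2,b2,c2,d2) : M2) = (a1+a2, b1+b2, c1+c2, d1+d2).
Proof. by []. Qed.
Lemma oppM2 (a1 b1 c1 d1 : P) : (- (a1,b1,c1,d1) : M2) = (-a1, -b1, -c1, -d1).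
Proof. by []. Qed.
Lemma zeroM2 : (0 : M2) = (0,0,0,0).
Proof. by []. Qed.
Lemma mmulDl : left_distributive mmul +%R.
Proof. move=> [[[a1 b1] c1] d1] [[[a2 b2] c2] d2] [[[a3 b3] c3] d3] /=. by rewrite !addM2 /=; congr (_,_,_,_); ring. Qed.
Lemma mmulDr : right_distributive mmul +%R.
Proof. move=> [[[a1 b1] c1] d1] [[[a2 b2] c2] d2] [[[a3 b3] c3] d3] /=. by rewrite !addM2 /=; congr (_,_,_,_); ring. Qed.
Lemma mone_neq0 : mone != 0.
Proof. apply/negP => /eqP [] /eqP; by rewrite oner_eq0. Qed.
HB.instance Definition _ := GRing.Zmodule_isNzRing.Build M2 mmulA mmul1 mmulr1 mmulDl mmulDr mone_neq0.
Definition mscale (c : F) (X : M2) : M2 :=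
  let: (a1,b1,c1,d1) := X in (c%:P * a1, c%:P * b1, c%:P * c1, c%:P * d1).
Lemma mscaleA a b v : mscale a (mscale b v) = mscale (a * b) v.
Proof. by case: v => [[[a1 b1] c1] d1] /=; rewrite polyCM; congr (_,_,_,_); ring. Qed.
Lemma mscale1 : left_id 1 mscale.
Proof. by case => [[[a1 b1] c1] d1] /=; rewrite !mul1r. Qed.
Lemma mscaleDr : right_distributive mscale +%R.
Proof. by move=> c [[[a1 b1] c1] d1] [[[a2 b2] c2] d2] /=; rewrite !addM2 /=; congr (_,_,_,_); ring. Qed.
Lemma mscaleDl v : {morph mscale^~ v: a b / a + b}.
Proof. by case: v => [[[a1 b1] c1] d1] a b /=; rewrite addM2 polyCD; congr (_,_,_,_); ring. Qed.
HB.instance Definition _ := GRing.Zmodule_isLmodule.Build F M2 mscaleA mscale1 mscaleDr mscaleDl.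
Lemma mscaleAl (c : F) (u v : M2) : c *: (u * v) = (c *: u) * v.
Proof. by case: u v => [[[a1 b1] c1] d1] [[[a2 b2] c2] d2] /=; congr (_,_,_,_); ring. Qed.
HB.instance Definition _ := GRing.Lmodule_isLalgebra.Build F M2 mscaleAl.
Lemma mscaleAr (c : F) (u v : M2) : c *: (u * v) = u * (c *: v).
Proof. by case: u v => [[[a1 b1] c1] d1] [[[a2 b2] c2] d2] /=; congr (_,_,_,_); ring. Qed.
HB.instance Definition _ := GRing.Lalgebra_isAlgebra.Build F M2 mscaleAr.
Lemma mulM2E (a1 b1 c1 d1 a2 b2 c2 d2 : P) :
  ((a1,b1,c1,d1) : M2) * ((a2,b2,c2,d2) : M2) = (a1*a2 + b1*c2, a1*b2 + b1*d2, c1*a2 + d1*c2, c1*b2 + d1*d2).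
Proof. by []. Qed.
Lemma scaleM2E (c : F) (a1 b1 c1 d1 : P) :
  c *: ((a1,b1,c1,d1) : M2) = (c%:P * a1, c%:P * b1, c%:P * c1, c%:P * d1).
Proof. by []. Qed.
Lemma oneM2E : (1 : M2) = (1,0,0,1).
Proof. by []. Qed.
End Model.

Lemma add4 (V : zmodType) (x1 x2 x3 x4 y1 y2 y3 y4 : V) :
  (x1 + x2 + x3 + x4) + (y1 + y2 + y3 + y4) =
  (x1 + y1) + (x2 + y2) + (x3 + y3) + (x4 + y4).
Proof.
rewrite addrACA; congr (_ + _); rewrite addrACA; congr (_ + _); exact: addrACA.
Qed.

Section Span.
Variables (F : fieldType) (p q : {poly F}) (W : algType F) (a b : W).
Hypothesis pres : is_W_presentation p q a b.
Variables (c1 c0 d1 d0 : F).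
Hypothesis a2 : a * a = -(c1 *: a) - c0%:A.
Hypothesis b2 : b * b = -(d1 *: b) - d0%:A.
Definition zz := a * b + b * a + d1 *: a + c1 *: b.
Lemma za : a * zz = zz * a.
Proof.
rewrite /zz !mulrDr !mulrDl -!scalerAl -!scalerAr !mulrA a2 -[b * a * a]mulrA a2.
rewrite !mulrDl !mulrDr !mulNr !mulrN -!scalerAl -!scalerAr ?mul1r ?mulr1 ?mulr_algl ?mulr_algr.
rewrite [LHS]addrC !addrA subrr add0r [RHS]addrC !addrA [_ *: (b * a) + _]addrC addrK.
by rewrite [_ - c0 *: b]addrC.
Qed.
Lemma zb : b * zz = zz * b.
Proof.
rewrite /zz !mulrDr !mulrDl -!scalerAl -!scalerAr !mulrA -[a * b * b]mulrA b2.
rewrite !mulrDl !mulrDr !mulNr !mulrN -!scalerAl -!scalerAr ?mul1r ?mulr1 ?mulr_algl ?mulr_algr.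
congr (_ + _); rewrite addrA [LHS]addrAC subrK [RHS]addrAC (addrAC (- (d1 *: (a * b)))) addNr add0r.
by rewrite addrC.
Qed.

Local Notation h := (horner_alg zz).

Lemma comm_h (x : W) : x * zz = zz * x -> forall e, x * h e = h e * x.
Proof.
move=> xz; elim/poly_ind => [|e c IH]; first by rewrite rmorph0 mulr0 mul0r.
rewrite rmorphD rmorphM /= horner_algX horner_algC mulrDr mulrDl mulrA IH -[h e * x * zz]mulrA xz mulrA.
by rewrite mulr_algr mulr_algl.
Qed.

Definition S x := exists e0 e1 e2 e3, x = h e0 + h e1 * a + h e2 * b + h e3 * (a * b).

Lemma S_add x y : S x -> S y -> S (x + y).
Proof.
move=> [e0 [e1 [e2 [e3 ->]]]] [f0 [f1 [f2 [f3 ->]]]].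
exists (e0 + f0), (e1 + f1), (e2 + f2), (e3 + f3).
by rewrite !rmorphD !mulrDl add4.
Qed.
Lemma S_scale c x : S x -> S (c *: x).
Proof.
move=> [e0 [e1 [e2 [e3 ->]]]].
exists (c *: e0), (c *: e1), (c *: e2), (c *: e3).
by rewrite !linearZ /= -!scalerAl !scalerDr !mul1r.
Qed.
Lemma S_opp x : S x -> S (- x).
Proof. by move=> Sx; rewrite -scaleN1r; apply: S_scale. Qed.
Lemma S_sub x y : S x -> S y -> S (x - y).
Proof. by move=> Sx Sy; apply: S_add => //; apply: S_opp. Qed.
Lemma S_hmul e x : S x -> S (h e * x).
Proof.
move=> [e0 [e1 [e2 [e3 ->]]]].
exists (e * e0), (e * e1), (e * e2), (e * e3).
by rewrite !rmorphM !mulrDr !mulrA.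
Qed.
Lemma S1 : S 1.
Proof. by exists 1, 0, 0, 0; rewrite rmorph1 !rmorph0 !mul0r !addr0. Qed.
Lemma Sa : S a.
Proof. by exists 0, 1, 0, 0; rewrite rmorph1 !rmorph0 !mul0r mul1r add0r !addr0. Qed.
Lemma Sb : S b.
Proof. by exists 0, 0, 1, 0; rewrite rmorph1 !rmorph0 !mul0r mul1r !add0r !addr0. Qed.
Lemma Sab : S (a * b).
Proof. by exists 0, 0, 0, 1; rewrite rmorph1 !rmorph0 !mul0r mul1r !add0r. Qed.
Lemma Salg c : S c%:A.
Proof. by apply: S_scale; apply: S1. Qed.
Lemma Sz : S zz.
Proof. by rewrite -(mulr1 zz) -[zz in zz * 1](horner_algX zz); apply: S_hmul; apply: S1. Qed.

Lemma S_left_a x : S x -> S (a * x).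
Proof.
move=> [e0 [e1 [e2 [e3 ->]]]].
rewrite !mulrDr !mulrA !(comm_h za) -!mulrA.
apply: S_add; [apply: S_add; [apply: S_add|]|]; apply: S_hmul.
- exact: Sa.
- by rewrite a2; apply: S_sub; [apply: S_opp; apply: S_scale; apply: Sa | apply: Salg].
- exact: Sab.
- rewrite mulrA a2 mulrBl mulNr -scalerAl mulr_algl.
  by apply: S_sub; [apply: S_opp; apply: S_scale; apply: Sab | apply: S_scale; apply: Sb].
Qed.

Lemma ba_eq : b * a = zz - a * b - d1 *: a - c1 *: b.
Proof. by apply/esym/eqP; rewrite !subr_eq /zz [X in _ == X]addrC !addrA [X in X == _]addrAC. Qed.

Lemma S_ba : S (b * a).
Proof.
rewrite ba_eq; apply: S_sub; [apply: S_sub; [apply: S_sub|]|].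
- exact: Sz.
- exact: Sab.
- by apply: S_scale; apply: Sa.
- by apply: S_scale; apply: Sb.
Qed.

Lemma S_left_b x : S x -> S (b * x).
Proof.
move=> [e0 [e1 [e2 [e3 ->]]]].
rewrite !mulrDr !mulrA !(comm_h zb) -!mulrA.
apply: S_add; [apply: S_add; [apply: S_add|]|]; apply: S_hmul.
- exact: Sb.
- exact: S_ba.
- by rewrite b2; apply: S_sub; [apply: S_opp; apply: S_scale; apply: Sb | apply: Salg].
- rewrite mulrA ba_eq !mulrBl -!scalerAl -[a * b * b]mulrA [in a * (b * b)]b2 mulrBr mulrN -scalerAr mulr_algr.
  apply: S_sub; [apply: S_sub; [apply: S_sub|]|].
  + by rewrite -[zz in zz * b](horner_algX zz); apply: S_hmul; apply: Sb.
  + by apply: S_sub; [apply: S_opp; apply: S_scale; apply: Sab | apply: S_scale; apply: Sa].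
  + by apply: S_scale; apply: Sab.
  + by apply: S_scale; rewrite b2; apply: S_sub; [apply: S_opp; apply: S_scale; apply: Sb | apply: Salg].
Qed.

Lemma spanW x : S x.
Proof.
suff H : forall x y, S y -> S (x * y) by rewrite -(mulr1 x); apply: H; apply: S1.
move=> {}x; move: x; apply: (W_indP (P := fun x => forall y, S y -> S (x * y)) pres).
- by move=> y Sy; rewrite mul1r.
- by move=> x y Hx Hy w Sw; rewrite mulrDl; apply: S_add; [apply: Hx|apply: Hy].
- by move=> c x Hx w Sw; rewrite -scalerAl; apply: S_scale; apply: Hx.
- by move=> x y Hx Hy w Sw; rewrite -mulrA; apply: Hx; apply: Hy.
- by move=> y Sy; apply: S_left_a.
- by move=> y Sy; apply: S_left_b.
Qed.
End Span.

Lemma quad_eq (F : fieldType) (W : algType F) (x : W) (r : {poly F}) :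
  r \is monic -> size r = 3%N -> horner_alg x r = 0 ->
  x * x = -(r`_1 *: x) - (r`_0)%:A.
Proof.
move=> mr sr; rewrite horner_quad // expr2 => /eqP.
by rewrite -addrA addr_eq0 opprD => /eqP.
Qed.

Lemma lin4 (R : comRingType) (x e1 e2 e3 e4 k1 k2 k3 k4 : R) :
  e1 = 0 -> e2 = 0 -> e3 = 0 -> e4 = 0 ->
  x = k1 * e1 + k2 * e2 + k3 * e3 + k4 * e4 -> x = 0.
Proof. by move=> -> -> -> -> ->; rewrite !mulr0 !addr0. Qed.

Lemma size_quadN (F : fieldType) (u v : F) :
  size (-('X * 'X + (u%:P * 'X + v%:P))) = 3%N.
Proof.
rewrite size_polyN size_polyDl; first by rewrite size_mulX ?polyX_eq0 // size_polyX.
rewrite size_mulX ?polyX_eq0 // size_polyX size_MXaddC.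
by case: ifP => // _; rewrite ltnS ltnS (leq_trans (size_polyC_leq1 _)).
Qed.

Section Main.
Variables (F : fieldType) (p q : {poly F}) (W : algType F) (a b : W).
Hypotheses (mp : p \is monic) (sp : size p = 3%N) (mq : q \is monic) (sq : size q = 3%N).
Hypothesis pres : is_W_presentation p q a b.
Local Notation P := {poly F}.

Definition Am : M2 F := (0, -(p`_0)%:P, 1, -(p`_1)%:P).
Definition Bm : M2 F := ('X, -('X * 'X + (q`_1)%:P * 'X + (q`_0)%:P), 1, -(q`_1)%:P - 'X).

Lemma Am_root : horner_alg Am p = 0.
Proof.
by rewrite horner_quad // expr2 /Am mulM2E oneM2E !scaleM2E !addM2 /= zeroM2; congr (_,_,_,_); ring.
Qed.
Lemma Bm_root : horner_alg Bm q = 0.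
Proof.
by rewrite horner_quad // expr2 /Bm mulM2E oneM2E !scaleM2E !addM2 /= zeroM2; congr (_,_,_,_); ring.
Qed.

Let a2 := quad_eq mp sp pres.1.
Let b2 := quad_eq mq sq pres.2.1.

Variable pi : W -> M2 F.
Hypotheses (piD : forall x y, pi (x + y) = pi x + pi y)
  (piZ : forall c x, pi (c *: x) = c *: pi x)
  (piM : forall x y, pi (x * y) = pi x * pi y) (pi1 : pi 1 = 1)
  (piH : forall x e, pi (horner_alg x e) = horner_alg (pi x) e).
Hypotheses (pia : pi a = Am) (pib : pi b = Bm).
Lemma pi0 : pi 0 = 0.
Proof. by rewrite -(scale0r 0) piZ scale0r. Qed.
Lemma piN x : pi (- x) = - pi x.
Proof. by rewrite -scaleN1r piZ scaleN1r. Qed.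
Lemma piB x y : pi (x - y) = pi x - pi y.
Proof. by rewrite piD piN. Qed.

Definition fz : P := -('X * 'X + ((q`_1 - p`_1)%:P * 'X + (q`_0 + p`_0)%:P)).
Local Notation z := (zz a b p`_1 q`_1).

Lemma pi_z : pi z = (fz, 0, 0, fz).
Proof.
rewrite /zz !piD !piZ !piM pia pib /Am /Bm !mulM2E !scaleM2E !addM2 /= /fz.
by rewrite polyCB polyCD; congr (_,_,_,_); ring.
Qed.

Lemma pi_h e : pi (horner_alg z e) = (e \Po fz, 0, 0, e \Po fz).
Proof.
rewrite piH pi_z; elim/poly_ind: e => [|e c IH].
  by rewrite rmorph0 comp_poly0 zeroM2.
rewrite rmorphD rmorphM /= IH horner_algX horner_algC oneM2E scaleM2E mulM2E addM2.
by rewrite comp_polyD comp_polyM comp_polyX comp_polyC; congr (_,_,_,_); ring.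
Qed.


Lemma size_fz : size fz = 3%N.
Proof. by rewrite /fz size_quadN. Qed.

Lemma comp_fz0 e : e \Po fz = 0 -> e = 0.
Proof. by move/eqP; rewrite comp_poly_eq0 ?size_fz // => /eqP. Qed.

Lemma pi_inj0 x : pi x = 0 -> x = 0.
Proof.
have [e0 [e1 [e2 [e3 ->]]]] := spanW pres a2 b2 x.
rewrite !piD !piM !pi_h pia pib /Am /Bm !mulM2E !addM2 /= zeroM2.
move=> [E11 E12 E21 E22].
set u0 := e0 \Po fz in E11 E12 E21 E22.
set u1 := e1 \Po fz in E11 E12 E21 E22.
set u2 := e2 \Po fz in E11 E12 E21 E22.
set u3 := e3 \Po fz in E11 E12 E21 E22.
pose Y : P := -('X * 'X + ((q`_1)%:P * 'X + ((q`_0)%:P - (p`_0)%:P))).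
pose L : P := 'X + 'X + ((q`_1)%:P - (p`_1)%:P).
pose Det := Y * (Y + (p`_1)%:P * L) + (p`_0)%:P * (L * L).
have D3 : Det * u3 = 0.
  apply: (lin4 (k1 := -Y) (k2 := L) (k3 := (p`_1)%:P * Y + (p`_0)%:P * L) (k4 := Y) E11 E12 E21 E22).
  rewrite /Det /Y /L; ring.
have D2 : Det * u2 = 0.
  apply: (lin4 (k1 := (p`_0)%:P * L) (k2 := Y + (p`_1)%:P * L) (k3 := (p`_0)%:P * Y) (k4 := -((p`_0)%:P * L)) E11 E12 E21 E22).
  rewrite /Det /Y /L; ring.
have Dn0 : Det != 0.
  have sY : size Y = 3%N by rewrite /Y -polyCB size_quadN.
  have Yn0 : Y != 0 by rewrite -size_poly_eq0 sY.
  have sL : (size L <= 2)%N.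
    apply: (leq_trans (size_polyD _ _)); rewrite geq_max; apply/andP; split.
    - by apply: (leq_trans (size_polyD _ _)); rewrite size_polyX maxnn.
    - by rewrite -polyCB (leq_trans (size_polyC_leq1 _)).
  have sc1L : (size ((p`_1)%:P * L)%R <= 2)%N.
    have := size_polyC_leq1 (p`_1); have := size_mul_leq (p`_1)%:P L; lia.
  have sYc : size (Y + (p`_1)%:P * L) = 3%N by rewrite size_polyDl sY // ltnS.
  have Yc0 : Y + (p`_1)%:P * L != 0 by rewrite -size_poly_eq0 sYc.
  have sprod : size (Y * (Y + (p`_1)%:P * L)) = 5%N by rewrite size_mul // sY sYc.
  have srest : (size ((p`_0)%:P * (L * L))%R < 5)%N.
    have := size_polyC_leq1 (p`_0); have := size_mul_leq (p`_0)%:P (L * L).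
    have := size_mul_leq L L; lia.
  by rewrite -size_poly_eq0 /Det size_polyDl sprod.
have u3_0 : u3 = 0 by move/eqP: D3; rewrite mulf_eq0 (negbTE Dn0) => /eqP.
have u2_0 : u2 = 0 by move/eqP: D2; rewrite mulf_eq0 (negbTE Dn0) => /eqP.
rewrite u2_0 u3_0 in E11 E12 E21 E22.
have u1_0 : u1 = 0.
  by apply: (lin4 (k1 := 0) (k2 := 0) (k3 := 1) (k4 := 0) E11 E12 E21 E22); ring.
have u0_0 : u0 = 0.
  by apply: (lin4 (k1 := 1) (k2 := 0) (k3 := 0) (k4 := 0) E11 E12 E21 E22); ring.
rewrite (comp_fz0 u0_0) (comp_fz0 u1_0) (comp_fz0 u2_0) (comp_fz0 u3_0).
by rewrite !rmorph0 !mul0r !addr0.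
Qed.

Lemma pi_inj : injective pi.
Proof.
by move=> x y e; apply/eqP; rewrite -subr_eq0; apply/eqP/pi_inj0; rewrite piB e subrr.
Qed.

Definition adjM (X : M2 F) : M2 F :=
  let: (x11, x12, x21, x22) := X in (x22, - x12, - x21, x11).
Lemma adjMD X Y : adjM (X + Y) = adjM X + adjM Y.
Proof.
case: X Y => [[[x1 x2] x3] x4] [[[y1 y2] y3] y4]; by rewrite /= !addM2 /= !opprD.
Qed.
Lemma adjMZ c X : adjM (c *: X) = c *: adjM X.
Proof. by case: X => [[[x1 x2] x3] x4]; rewrite /= !scaleM2E /= !mulrN. Qed.
Lemma adjMM X Y : adjM (X * Y) = adjM Y * adjM X.
Proof.
by case: X Y => [[[x1 x2] x3] x4] [[[y1 y2] y3] y4]; rewrite /= !mulM2E /=; congr (_,_,_,_); ring.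
Qed.
Lemma adjM1 : adjM 1 = 1.
Proof. by rewrite oneM2E /= oppr0. Qed.

Variable star : W -> W.
Hypothesis adj : is_adjunction p q a b star.

Lemma starD x y : star (x + y) = star x + star y.
Proof. by have [sL _] := adj; have := sL 1 x y; rewrite !scale1r. Qed.
Lemma star0 : star 0 = 0.
Proof.
have [sL _] := adj; have := sL 1 0 0; rewrite !scale1r addr0.
by move/(congr1 (fun v => v - star 0)); rewrite subrr addrK => <-.
Qed.
Lemma starZ c x : star (c *: x) = c *: star x.
Proof. by have [sL _] := adj; have := sL c x 0; rewrite !addr0 star0 addr0. Qed.

Lemma pi_star x : pi (star x) = adjM (pi x).
Proof.
have [_ [s1 [sM [_ [sa sb]]]]] := adj.
move: x; apply: (W_indP (P := fun x => pi (star x) = adjM (pi x)) pres).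
- by rewrite s1 pi1 adjM1.
- by move=> x y Hx Hy; rewrite starD !piD Hx Hy adjMD.
- by move=> c x Hx; rewrite starZ !piZ Hx adjMZ.
- by move=> x y Hx Hy; rewrite sM !piM Hx Hy adjMM.
- rewrite sa piB piZ pi1 pia /Am oneM2E scaleM2E /= /trp !addM2 /= polyCN.
  by congr (_,_,_,_); ring.
- rewrite sb piB piZ pi1 pib /Bm oneM2E scaleM2E /= /trp !addM2 /= polyCN.
  by congr (_,_,_,_); ring.
Qed.

Variable Phi : {lrmorphism W -> W}.
Hypothesis injPhi : injective Phi.

Lemma key (x y : W) (r : P) : r \is monic -> size r = 3%N ->
  horner_alg x r = 0 -> x * y != y * x ->
  star (Phi x) = (- r`_1)%:A - Phi x.
Proof.
move=> mr sr hx nc.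
have hU : horner_alg (pi (Phi x)) r = 0 by rewrite -piH -lrmorph_horner hx rmorph0 pi0.
rewrite horner_quad // expr2 in hU.
case EU: (pi (Phi x)) hU => [[[u11 u12] u21] u22].
rewrite mulM2E oneM2E !scaleM2E !addM2 /= zeroM2 => [[E11 E12 E21 E22]].
pose s := u11 + u22 + (r`_1)%:P.
have [s0|sn0] := eqVneq s 0.
  apply: pi_inj; rewrite pi_star EU piB piZ pi1 EU /= oneM2E scaleM2E /= !addM2 /=.
  have e22 : u22 = - u11 - (r`_1)%:P.
    by apply/eqP; rewrite -subr_eq0; apply/eqP; rewrite -s0 /s; ring.
  by rewrite polyCN e22; congr (_,_,_,_); ring.
exfalso.
have u12_0 : u12 = 0.
  have : s * u12 = 0.
    by apply: (lin4 (k1 := 0) (k2 := 1) (k3 := 0) (k4 := 0) E11 E12 E21 E22); rewrite /s; ring.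
  by move/eqP; rewrite mulf_eq0 (negbTE sn0) => /eqP.
have u21_0 : u21 = 0.
  have : s * u21 = 0.
    by apply: (lin4 (k1 := 0) (k2 := 0) (k3 := 1) (k4 := 0) E11 E12 E21 E22); rewrite /s; ring.
  by move/eqP; rewrite mulf_eq0 (negbTE sn0) => /eqP.
have u11e : u11 = u22.
  have : s * (u11 - u22) = 0.
    rewrite u12_0 u21_0 in E11 E22.
    by apply: (lin4 (k1 := 1) (k2 := 0) (k3 := 0) (k4 := -1) E11 E12 E21 E22); rewrite /s; ring.
  by move/eqP; rewrite mulf_eq0 (negbTE sn0) subr_eq0 => /eqP.
have cm : pi (Phi (x * y - y * x)) = 0.
  rewrite rmorphB !rmorphM piB !piM EU.
  case: (pi (Phi y)) => [[[v11 v12] v21] v22].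
  rewrite !mulM2E u12_0 u21_0 u11e /= !addM2 /= zeroM2.
  by congr (_,_,_,_); ring.
move/pi_inj0: cm; rewrite -(rmorph0 Phi) => /injPhi /eqP.
by rewrite subr_eq0 (negbTE nc).
Qed.

Lemma ab_ncomm : a * b != b * a.
Proof.
apply/eqP => e; have := congr1 pi e; rewrite !piM pia pib /Am /Bm !mulM2E.
move=> [E11 _ _ _]; move: E11.
rewrite ?mul0r ?mulr0 ?mulr1 ?add0r ?addr0 -?addrA => E.
have := congr1 (fun r : {poly F} => size r) E; rewrite /= size_quadN size_polyN => e3.
by have := size_polyC_leq1 (p`_0); rewrite e3.
Qed.

Lemma main_sec x : Phi (star x) = star (Phi x).
Proof.
have [_ [s1 [sM [_ [sa sb]]]]] := adj.
move: x; apply: (W_indP (P := fun x => Phi (star x) = star (Phi x)) pres).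
- by rewrite s1 rmorph1 s1.
- by move=> x y Hx Hy; rewrite starD !rmorphD starD; congr (_ + _); [exact: Hx | exact: Hy].
- by move=> c x Hx; rewrite starZ !linearZ /= starZ; congr (_ *: _); exact: Hx.
- by move=> x y Hx Hy; rewrite sM !rmorphM sM; congr (_ * _); [exact: Hy | exact: Hx].
- rewrite sa (key mp sp pres.1 ab_ncomm) rmorphB /trp; congr (_ - _); exact: rmorph_alg.
- have ba : b * a != a * b by rewrite eq_sym ab_ncomm.
  rewrite sb (key mq sq pres.2.1 ba) rmorphB /trp.
  congr (_ - _); exact: rmorph_alg.
Qed.

End Main.

Unset Implicit Arguments.

Theorem mainTheorem18 (F : fieldType) (p q : {poly F})
    (W : algType F) (a b : W) (star : W -> W)
    (Phi : {lrmorphism W -> W}) :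
  p \is monic -> size p = 3%N ->
  q \is monic -> size q = 3%N ->
  is_W_presentation p q a b ->
  is_adjunction p q a b star ->
  injective Phi ->
  forall x : W, Phi (star x) = star (Phi x).
Proof.
move=> mp sp mq sq pres adj injPhi.
have [[pi0 [pia pib]] _] := pres.2.2 _ _ _ (Am_root mp sp) (Bm_root mq sq).
pose pi := fun x => pi0 x.
have piD : forall x y, pi (x + y) = pi x + pi y by move=> x y; rewrite /pi rmorphD.
have piZ : forall c x, pi (c *: x) = c *: pi x by move=> c x; rewrite /pi linearZ.
have piM : forall x y, pi (x * y) = pi x * pi y by move=> x y; rewrite /pi rmorphM.
have pi1 : pi 1 = 1 by rewrite /pi rmorph1.
have piH : forall x e, pi (horner_alg x e) = horner_alg (pi x) e.
  by move=> x e; rewrite /pi lrmorph_horner.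
exact: (main_sec mp sp mq sq pres piD piZ piM pi1 piH pia pib adj injPhi).
Qed.
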